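(* Let $q$ be a prime power, $2\le n\le m$, and $\mathcal{C}\subseteq\mathrm{Mat}$ a non-zero rank-metric code of minimum distance $d$. The following are equivalent: (1) $\mathcal{C}$ is MRD; (2) $\rho_{\mathrm c}(\mathcal{C},J)=\dim(J)$ for all subspaces $J\subseteq\mathbb{F}_q^n$ with $\dim(J)\le n-d+1$; (3) $\rho_{\mathrm c}(\mathcal{C},J)=\dim(J)$ for some subspace $J\subseteq\mathbb{F}_q^n$ with $\dim(J)=n-d+1$.
   Context: $\mathrm{Mat}$ is the $\mathbb{F}_q$-space of $n\times m$ matrices over $\mathbb{F}_q$; a rank-metric code is an $\mathbb{F}_q$-linear subspace, with minimum distance $d(\mathcal{C})=\min\{\mathrm{rk}(M)\mid M\in\mathcal{C},M\ne0\}$. A non-zero code with minimum distance $d$ satisfies $\dim\mathcal{C}\le m(n-d+1)$, and is MRD if equality holds. For a subspace $J\subseteq\mathbb{F}_q^n$, $\mathcal{C}(J,\mathrm c)=\{M\in\mathcal{C}\mid\mathrm{colsp}(M)\subseteq J\}$ and $\rho_{\mathrm c}(\mathcal{C},J)=(\dim\mathcal{C}-\dim\mathcal{C}(J^\perp,\mathrm c))/m$, with $J^\perp$ the orthogonal complement for the standard inner product. *)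

(* Defs.v *)
From HB Require Import structures.
From mathcomp Require Import all_boot all_order all_algebra all_field.
Set Implicit Arguments. Unset Strict Implicit. Unset Printing Implicit Defensive.
Import Order.TTheory GRing.Theory Num.Theory.
Local Open Scope ring_scope.

(* Rank-metric codes: F is the finite field F_q (q = #|F|), matrices are
   n x m over F, a code is an F-subspace of 'M[F]_(n,m). Vectors of F^n are
   represented as row vectors 'rV[F]_n. *)

(* Minimum distance: min rank of a non-zero codeword (n if no such codeword). *)
Definition mindist (F : finFieldType) (n m : nat) (C : {vspace 'M[F]_(n, m)}) : nat :=
  \big[minn/n]_(M : 'M[F]_(n, m) | (M \in C) && (M != 0%R)) \rank M.

Definition MRD (F : finFieldType) (n m : nat) (C : {vspace 'M[F]_(n, m)}) : Prop :=
  \dim C = (m * (n - mindist C + 1))%N.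

Definition colsp_sub (F : finFieldType) (n m : nat) (M : 'M[F]_(n, m))
  (J : {vspace 'rV[F]_n}) : bool :=
  [forall j : 'I_m, (col j M)^T \in J].

Definition perp (F : finFieldType) (n : nat) (J : {vspace 'rV[F]_n}) : {vspace 'rV[F]_n} :=
  <<[seq v <- enum 'rV[F]_n | [forall u : 'rV[F]_n, (u \in J) ==> (u *m v^T == 0%R)]]>>%VS.

Definition subcode_c (F : finFieldType) (n m : nat) (C : {vspace 'M[F]_(n, m)})
  (J : {vspace 'rV[F]_n}) : {vspace 'M[F]_(n, m)} :=
  <<[seq M <- enum 'M[F]_(n, m) | (M \in C) && colsp_sub M J]>>%VS.

Definition rho_c (F : finFieldType) (n m : nat) (C : {vspace 'M[F]_(n, m)})
  (J : {vspace 'rV[F]_n}) : rat :=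
  (((\dim C)%:R - (\dim (subcode_c C (perp J)))%:R) / m%:R)%R.

(* Main.v *)
Require Import Defs.
From HB Require Import structures.
From mathcomp Require Import all_boot all_order all_algebra all_field.
From mathcomp Require Import zify.
Import Order.TTheory GRing.Theory Num.Theory.
Local Open Scope ring_scope.

Lemma span_closed (K : fieldType) (vT : vectType K) (P : vT -> Prop) (s : seq vT) :
  P 0 -> (forall a u v, P u -> P v -> P (a *: u + v)) ->
  (forall x, x \in s -> P x) -> forall v, v \in <<s>>%VS -> P v.
Proof.
move=> P0 PD Ps v vs; rewrite (@coord_span _ _ _ (in_tuple s) v vs).
apply: (big_ind P) => //.
  by move=> x y Px Py; rewrite -[x]scale1r; apply: PD.
move=> i _; rewrite -[_ *: _]addr0; apply: PD => //; apply: Ps.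
by rewrite mem_nth // size_tuple.
Qed.

Lemma mem_perp (F : finFieldType) n (J : {vspace 'rV[F]_n}) u :
  u \in perp J <-> (forall x, x \in J -> x *m u^T = 0).
Proof.
split.
  move=> H x xJ; move: u H; apply: span_closed.
  - by rewrite trmx0 mulmx0.
  - by move=> a u v Hu Hv; rewrite linearD linearZ /= mulmxDr -scalemxAr Hu Hv scaler0 addr0.
  - move=> y; rewrite mem_filter => /andP[/forallP H _].
    by apply/eqP; move/implyP: (H x); apply.
move=> H; apply: memv_span; rewrite mem_filter mem_enum andbT.
by apply/forallP => x; apply/implyP => xJ; rewrite H.
Qed.

Lemma mem_sub (F : finFieldType) n m (C : {vspace 'M[F]_(n, m)}) (J : {vspace 'rV[F]_n}) M :
  M \in subcode_c C J <-> (M \in C /\ forall j, (col j M)^T \in J).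
Proof.
split.
  move: M; apply: span_closed.
  - by split; [exact: mem0v | move=> j; rewrite linear0 linear0 mem0v].
  - move=> a u v [Cu Ju] [Cv Jv]; split; first by rewrite memvD // memvZ.
    by move=> j; rewrite !linearD !linearZ /= memvD // memvZ.
  - move=> y; rewrite mem_filter => /andP[/andP[Cy H] _]; split => // j.
    exact: (forallP H j).
move=> [CM H]; apply: memv_span; rewrite mem_filter mem_enum andbT CM /=.
by apply/forallP.
Qed.

Lemma mem_S (F : finFieldType) n m (C : {vspace 'M[F]_(n, m)}) (J : {vspace 'rV[F]_n}) M :
  M \in subcode_c C (perp J) <-> (M \in C /\ forall x, x \in J -> x *m M = 0).
Proof.
split=> [/mem_sub|H0]; last apply/mem_sub; [move=> [CM H] | move: H0 => [CM H]]; split => //.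
  move=> x xJ; apply/matrixP => i j; rewrite ord1 {i}.
  have /mem_perp Hj := H j; have := Hj x xJ; rewrite trmxK => /matrixP/(_ 0 0).
  by rewrite !mxE => E; rewrite -[RHS]E; apply: eq_bigr => k _; rewrite mxE.
move=> j; apply/mem_perp => x xJ; rewrite trmxK.
by rewrite colE mulmxA (H x xJ) mul0mx.
Qed.

Lemma step (F : finFieldType) n m (C : {vspace 'M[F]_(n, m)}) (J : {vspace 'rV[F]_n}) v :
  (\dim (subcode_c C (perp J)) <= \dim (subcode_c C (perp (J + <[v]>))) + m)%N.
Proof.
pose f : 'Hom('M[F]_(n, m), 'rV[F]_m) := linfun (mulmx v).
rewrite -(limg_ker_dim f (subcode_c C (perp J))) leq_add //.
  apply: dimvS; apply/subvP => M /memv_capP[/mem_S[CM H]].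
  rewrite memv_ker lfunE /= => /eqP vM; apply/mem_S; split => // x /memv_addP[y yJ [z /vlineP[k ->] ->]].
  by rewrite mulmxDl -scalemxAl H // vM scaler0 addr0.
by apply: (leq_trans (dimvS (subvf _))); rewrite dimvf dim_matrix mul1r.
Qed.

Lemma steps (F : finFieldType) n m (C : {vspace 'M[F]_(n, m)}) (t : seq 'rV[F]_n) :
  forall J : {vspace 'rV[F]_n},
  (\dim (subcode_c C (perp J)) <= \dim (subcode_c C (perp (J + <<t>>))) + m * size t)%N.
Proof.
elim: t => [|v t IH] J.
  by rewrite span_nil addv0 muln0 addn0.
apply: leq_trans (@step _ _ _ C J v) _.
rewrite span_cons addvA /= mulnS addnCA [X in (_ <= X)%N]addnC leq_add2r; apply: IH.
Qed.

Lemma S0 (F : finFieldType) n m (C : {vspace 'M[F]_(n, m)}) :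
  subcode_c C (perp 0) = C.
Proof.
apply/vspaceP => M; apply/idP/idP => [/mem_S[]//|CM].
by apply/mem_S; split => // x; rewrite memv0 => /eqP ->; rewrite mul0mx.
Qed.

Lemma lowerb (F : finFieldType) n m (C : {vspace 'M[F]_(n, m)}) (J : {vspace 'rV[F]_n}) :
  (\dim C <= \dim (subcode_c C (perp J)) + m * \dim J)%N.
Proof.
have := @steps _ _ _ C (vbasis J) 0%VS; rewrite S0 add0v (span_basis (vbasisP J)) size_tuple.
by [].
Qed.

Lemma rank_bound (F : finFieldType) n m (J : {vspace 'rV[F]_n}) (M : 'M[F]_(n, m)) :
  (forall x, x \in J -> x *m M = 0) -> (\rank M + \dim J <= n)%N.
Proof.
move=> H.
pose X := vbasis J.
pose A : 'M[F]_(\dim J, n) := \matrix_(i < \dim J) X`_i.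
have AM : A *m M = 0.
  apply/row_matrixP => i; rewrite row_mul rowK row0; apply: H; apply: vbasis_mem.
  by apply: mem_nth; rewrite size_tuple.
have fA : row_free A.
  rewrite -kermx_eq0; apply/rowV0P => w /sub_kermxP wA.
  rewrite mulmx_sum_row in wA.
  have wA' : \sum_(i < \dim J) w 0 i *: X`_i = 0.
    by rewrite -[RHS]wA; apply: eq_bigr => i _; rewrite rowK.
  apply/rowP => i; rewrite mxE.
  exact: (freeP (basis_free (vbasisP J)) (fun i => w 0 i) wA' i).
have := mulmx0_rank_max AM; move/eqP: fA => ->.
by rewrite addnC.
Qed.

Lemma my_bigmin_le (I : eqType) (r : seq I) (P : pred I) (G : I -> nat) x i :
  i \in r -> P i -> (\big[minn/x]_(j <- r | P j) G j <= G i)%N.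
Proof.
elim: r => [//|a r IH]; rewrite inE big_cons => /orP[/eqP <- Pi|ir Pi].
  by rewrite Pi geq_minl.
case: (P a); last exact: IH.
by rewrite geq_min IH ?orbT.
Qed.

Lemma mind_le (F : finFieldType) n m (C : {vspace 'M[F]_(n, m)}) M :
  M \in C -> M != 0 -> (mindist C <= \rank M)%N.
Proof.
by move=> CM nz; rewrite /mindist; apply: my_bigmin_le; rewrite ?mem_index_enum ?CM.
Qed.

Lemma mind_ge1 (F : finFieldType) n m (C : {vspace 'M[F]_(n, m)}) :
  (0 < n)%N -> (0 < mindist C)%N.
Proof.
move=> n0; rewrite /mindist; apply: (big_ind (fun x => 0 < x)%N) => //.
  by move=> x y x0 y0; rewrite leq_min x0 y0.
by move=> M /andP[_ nz]; rewrite lt0n mxrank_eq0.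
Qed.

Lemma mind_len (F : finFieldType) n m (C : {vspace 'M[F]_(n, m)}) :
  (mindist C <= n)%N.
Proof.
rewrite /mindist; apply: (big_ind (fun x => x <= n)%N) => //.
  by move=> x y x0 y0; rewrite geq_min x0.
by move=> M _; apply: rank_leq_row.
Qed.

Lemma zeroS (F : finFieldType) n m (C : {vspace 'M[F]_(n, m)}) (J : {vspace 'rV[F]_n}) :
  (n - mindist C + 1 <= \dim J)%N -> \dim (subcode_c C (perp J)) = 0%N.
Proof.
move=> hJ; apply/eqP; rewrite dimv_eq0 -subv0; apply/subvP => M /mem_S[CM H].
rewrite memv0; apply/negPn/negP => nz.
have := @mind_le _ _ _ _ _ CM nz; have := @rank_bound _ _ _ _ _ H; have := @mind_len _ _ _ C.
lia.
Qed.

Lemma rho_eq (F : finFieldType) n m (C : {vspace 'M[F]_(n, m)}) (J : {vspace 'rV[F]_n}) :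
  (0 < m)%N ->
  (rho_c C J = (\dim J)%:R) <-> (\dim C = \dim (subcode_c C (perp J)) + \dim J * m)%N.
Proof.
move=> m0.
have fle : (\dim (subcode_c C (perp J)) <= \dim C)%N.
  by apply: dimvS; apply/subvP => M /mem_S[].
rewrite /rho_c -natrB //.
have mnz : (m%:R : rat) != 0 by rewrite pnatr_eq0 -lt0n.
split => [E|E].
  have /eqP : ((\dim C - \dim (subcode_c C (perp J)))%N%:R : rat) = (\dim J * m)%N%:R.
    by rewrite natrM -E divfK.
  rewrite eqr_nat => /eqP E'; lia.
have -> : (\dim C - \dim (subcode_c C (perp J)))%N = (\dim J * m)%N by lia.
by rewrite natrM mulfK.
Qed.

Lemma extend (F : finFieldType) n (J : {vspace 'rV[F]_n}) k :
  (\dim J <= k <= n)%N ->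
  exists t : seq 'rV[F]_n, size t = (k - \dim J)%N /\ (k <= \dim (J + <<t>>))%N.
Proof.
move=> /andP[jk kn].
pose r := (k - \dim J)%N.
have dC : \dim J^C = (n - \dim J)%N by rewrite dimv_compl dimvf dim_matrix mul1r.
have sz : size (take r (vbasis J^C)) = r by rewrite size_takel // size_tuple dC; lia.
exists (take r (vbasis J^C)); split => //.
have fr : free (take r (vbasis J^C)).
  by apply: (@catl_free _ _ (drop r (vbasis J^C))); rewrite cat_take_drop (basis_free (vbasisP _)).
have cap0 : \dim (J :&: <<take r (vbasis J^C)>>) = 0%N.
  apply/eqP; rewrite dimv_eq0 -subv0 -(capv_compl J) capvS //.
  by apply/span_subvP => x /mem_take /vbasis_mem.
have := dimv_sum_cap J <<take r (vbasis J^C)>>; rewrite cap0 (eqP fr) sz.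
rewrite addn0 => ->; rewrite /r; lia.
Qed.

Theorem theorem5p4 (F : finFieldType) (n m : nat) (C : {vspace 'M[F]_(n, m)}) :
  (2 <= n)%N -> (n <= m)%N -> C != 0%VS ->
  [/\ (MRD C <->
       (forall J : {vspace 'rV[F]_n},
          (\dim J <= n - mindist C + 1)%N -> rho_c C J = (\dim J)%:R)),
      ((forall J : {vspace 'rV[F]_n},
          (\dim J <= n - mindist C + 1)%N -> rho_c C J = (\dim J)%:R) <->
       (exists J : {vspace 'rV[F]_n},
          \dim J = (n - mindist C + 1)%N /\ rho_c C J = (\dim J)%:R))
    & ((exists J : {vspace 'rV[F]_n},
          \dim J = (n - mindist C + 1)%N /\ rho_c C J = (\dim J)%:R) <-> MRD C)].
Proof.
move=> n2 nm _.
have m0 : (0 < m)%N by lia.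
have d1 := @mind_ge1 _ _ m C (ltnW n2).
have dn := @mind_len _ _ _ C.
set d := mindist C in d1 dn *.
have H12 : MRD C -> forall J : {vspace 'rV[F]_n},
    (\dim J <= n - d + 1)%N -> rho_c C J = (\dim J)%:R.
  rewrite /MRD -/d => HC J hJ; apply/rho_eq => //.
  have lb := @lowerb _ _ _ C J.
  have [t [st ht]] := @extend _ _ J (n - d + 1)%N ltac:(apply/andP; split => //; lia).
  have z := @zeroS _ _ _ C (J + <<t>>)%VS ltac:(rewrite -/d; lia).
  have ub := @steps _ _ _ C t J; rewrite z st add0n mulnBr in ub.
  have le : (m * \dim J <= m * (n - d + 1))%N by rewrite leq_mul2l hJ orbT.
  rewrite mulnC; lia.
have H23 : (forall J : {vspace 'rV[F]_n},
    (\dim J <= n - d + 1)%N -> rho_c C J = (\dim J)%:R) ->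
    exists J : {vspace 'rV[F]_n}, \dim J = (n - d + 1)%N /\ rho_c C J = (\dim J)%:R.
  move=> H.
  have [t [st ht]] := @extend F n 0%VS (n - d + 1)%N ltac:(rewrite dimv0; apply/andP; split => //; lia).
  have e : \dim (0 + <<t>>)%VS = (n - d + 1)%N.
    apply/eqP; rewrite eqn_leq ht andbT add0v; apply: leq_trans (dim_span _) _.
    by rewrite st dimv0 subn0.
  by exists (0 + <<t>>)%VS; split => //; apply: H; rewrite e.
have H31 : (exists J : {vspace 'rV[F]_n}, \dim J = (n - d + 1)%N /\ rho_c C J = (\dim J)%:R) ->
    MRD C.
  move=> [J [hJ /(@rho_eq _ _ _ C J m0) E]]; rewrite /MRD -/d.
  by rewrite E (@zeroS _ _ _ C J) ?hJ -/d // add0n mulnC.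
split; split.
- by move=> H J hJ; apply: H12.
- by move=> H; apply: H31; apply: H23.
- by move=> H; apply: H23.
- by move=> H J hJ; exact: (H12 (H31 H) J hJ).
- by move=> H; apply: H31.
- by move=> H; apply: H23; apply: H12.
Qed.
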